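(* Let $S=(P,L)$ be a slim dense near hexagon and let $(R,\psi)$ be a non-abelian representation of $S$ with $\psi(x)=\langle r_x\rangle$. Let $x\in P$ and let $Y$ be a finite subset of $\Gamma_3(x)$. Then $[r_x,\prod_{y\in Y}r_y]=1$ (for the product taken in any order) if and only if $|Y|$ is even.
   Context: A slim partial linear space has exactly $3$ points per line (two distinct points on at most one line). $\Gamma_3(x)$ is the set of points at distance $3$ from $x$ in the collinearity graph. A near hexagon is a connected partial linear space of diameter $3$ with no point collinear with all others such that every point has a unique nearest point on every line. A quad is a convex subset of diameter $2$ in which no point is collinear with all others; the near hexagon is dense if any two points at distance $2$ lie in a quad. A representation $(R,\psi)$ of $S$ is a group $R$ with a map $\psi$ assigning to each point $x$ a subgroup $\psi(x)=\langle r_x\rangle$ of order $2$, such that $R$ is generated by the $r_x$ and, for every line $\{x,y,z\}$, $\{1,r_x,r_y,r_z\}$ is a Klein four subgroup; it is non-abelian if $R$ is. $[g,h]=g^{-1}h^{-1}gh$. *)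

(* Defs.v *)
From Stdlib Require Import List Arith.
Import ListNotations.

Set Implicit Arguments.

Section Geometry.
Variables (P L : Type) (I : P -> L -> Prop).

Definition slim_pls : Prop :=
  (forall l : L, exists a b c : P,
      a <> b /\ a <> c /\ b <> c /\ I a l /\ I b l /\ I c l /\
      (forall z, I z l -> z = a \/ z = b \/ z = c)) /\
  (forall (x y : P) (l m : L), x <> y -> I x l -> I y l -> I x m -> I y m -> l = m).

Definition collinear (x y : P) : Prop := x <> y /\ exists l, I x l /\ I y l.

Fixpoint walk (x : P) (p : list P) (y : P) : Prop :=
  match p with
  | [] => x = y
  | z :: p' => collinear x z /\ walk z p' y
  end.

Definition within (n : nat) (x y : P) : Prop :=
  exists p, length p <= n /\ walk x p y.

Definition dist_eq (x y : P) (n : nat) : Prop :=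
  within n x y /\ forall m, m < n -> ~ within m x y.

Definition connected : Prop := forall x y, exists n, within n x y.

Definition Gamma3 (x y : P) : Prop := dist_eq x y 3.

Definition convex (X : P -> Prop) : Prop :=
  forall x y n p, X x -> X y -> dist_eq x y n -> length p = n -> walk x p y ->
    forall z, In z p -> X z.

Definition diameter (X : P -> Prop) (d : nat) : Prop :=
  (forall x y, X x -> X y -> within d x y) /\
  (exists x y, X x /\ X y /\ dist_eq x y d).

Definition no_point_collinear_with_all (X : P -> Prop) : Prop :=
  ~ exists x, X x /\ forall y, X y -> y <> x -> collinear x y.

Definition quad (Q : P -> Prop) : Prop :=
  convex Q /\ diameter Q 2 /\ no_point_collinear_with_all Q.

Definition near_hexagon : Prop :=
  connected /\ diameter (fun _ => True) 3 /\
  no_point_collinear_with_all (fun _ => True) /\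
  (forall (x : P) (l : L), exists y, I y l /\
     forall z, I z l -> z <> y -> forall n, within n x z ->
       exists m, m < n /\ within m x y).

Definition dense : Prop :=
  forall x y, dist_eq x y 2 -> exists Q, quad Q /\ Q x /\ Q y.

Definition slim_dense_near_hexagon : Prop :=
  slim_pls /\ near_hexagon /\ dense.

End Geometry.

Record group (R : Type) := Group {
  gmul : R -> R -> R;
  gone : R;
  ginv : R -> R;
  gmulA : forall a b c, gmul a (gmul b c) = gmul (gmul a b) c;
  gmul1l : forall a, gmul gone a = a;
  gmul1r : forall a, gmul a gone = a;
  gmulVl : forall a, gmul (ginv a) a = gone;
  gmulVr : forall a, gmul a (ginv a) = gone
}.

Section GroupDefs.
Variables (R : Type) (G : group R).
Local Notation "a * b" := (gmul G a b).
Local Notation one := (gone G).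

Definition subgroup (S : R -> Prop) : Prop :=
  S one /\ (forall a b, S a -> S b -> S (a * b)) /\ (forall a, S a -> S (ginv G a)).

Definition generates (A : Type) (g : A -> R) : Prop :=
  forall S, subgroup S -> (forall a, S (g a)) -> forall h, S h.

Definition abelian : Prop := forall a b, a * b = b * a.

Definition comm (g h : R) : R := ginv G g * ginv G h * g * h.

Fixpoint gprod (s : list R) : R :=
  match s with [] => one | a :: s' => a * gprod s' end.

Definition klein4 (a b c : R) : Prop :=
  let X := fun g => g = one \/ g = a \/ g = b \/ g = c in
  one <> a /\ one <> b /\ one <> c /\ a <> b /\ a <> c /\ b <> c /\
  subgroup X /\ (forall g, X g -> g * g = one).

End GroupDefs.

(* representation (R, psi) of S with psi(x) = <r x> *)
Definition representation (P L : Type) (I : P -> L -> Prop)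
    (R : Type) (G : group R) (r : P -> R) : Prop :=
  (forall x, r x <> gone G /\ gmul G (r x) (r x) = gone G) /\
  generates G r /\
  (forall l x y z, I x l -> I y l -> I z l -> x <> y -> x <> z -> y <> z ->
      klein4 G (r x) (r y) (r z)).

(* Main.v *)
Require Import Defs.
From Stdlib Require Import List Arith Lia Classical ClassicalEpsilon.
Import ListNotations.
Set Implicit Arguments.
Unset Strict Implicit.
Section Grp.
Variables (R : Type) (G : group R).
Local Notation "a * b" := (gmul G a b).
Local Notation e := (gone G).
Local Notation inv := (ginv G).

Lemma cancel_l a b c : a * b = a * c -> b = c.
Proof.
  intros H. rewrite <- (gmul1l G b), <- (gmul1l G c), <- (gmulVl G a), <- !gmulA, H. reflexivity.
Qed.

Lemma cancel_r a b c : b * a = c * a -> b = c.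
Proof.
  intros H. rewrite <- (gmul1r G b), <- (gmul1r G c), <- (gmulVr G a), !gmulA, H. reflexivity.
Qed.

Lemma inv_uniq a b : a * b = e -> inv a = b.
Proof.
  intros H. apply (cancel_l (a:=a)). rewrite gmulVr. symmetry; assumption.
Qed.

Lemma inv_mul a b : inv (a * b) = inv b * inv a.
Proof.
  apply inv_uniq. rewrite <- !gmulA, (gmulA G b), gmulVr, gmul1l, gmulVr. reflexivity.
Qed.

Lemma inv_invol a : a * a = e -> inv a = a.
Proof. apply inv_uniq. Qed.

Lemma comm_invol a b : a * a = e -> b * b = e -> comm G a b = a * (b * (a * b)).
Proof.
  intros Ha Hb. unfold comm. rewrite (inv_invol Ha), (inv_invol Hb), <- !gmulA. reflexivity.
Qed.

Lemma grid_alg X Z U V : X * U = U * X -> X * V = V * X -> Z * U = U * Z -> Z * V = V * Z ->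
  (X * U) * (Z * V) = (X * V) * (Z * U) -> (X * U) * (Z * V) = (Z * V) * (X * U) ->
  X * Z = Z * X.
Proof.
  intros XU XV ZU ZV E1 E2.
  assert (K1 : U * (Z * V) = Z * (U * V)) by (rewrite !gmulA, ZU; reflexivity).
  assert (K2 : V * (Z * U) = Z * (V * U)) by (rewrite !gmulA, ZV; reflexivity).
  assert (UV : U * V = V * U).
  { rewrite <- !gmulA in E1. apply cancel_l in E1. rewrite K1, K2 in E1. apply cancel_l in E1. exact E1. }
  assert (K3 : V * (X * U) = X * (U * V)) by (rewrite UV, !gmulA, XV; reflexivity).
  rewrite <- !gmulA in E2. rewrite K1, K3 in E2. rewrite !gmulA in E2.
  apply cancel_r in E2. apply cancel_r in E2. exact E2.
Qed.

Lemma comm_mulr a b m : a * a = e -> b * b = e -> m * m = e -> a * m = m * a -> b * m = m * b ->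
  comm G a (b * m) = comm G a b.
Proof.
  intros Ha Hb Hm Ham Hbm.
  assert (Hbm2 : (b * m) * (b * m) = e).
  { rewrite <- gmulA, (gmulA G m), <- Hbm, <- gmulA, Hm, gmul1r. exact Hb. }
  rewrite (comm_invol Ha Hbm2), (comm_invol Ha Hb).
  f_equal.
  rewrite <- !gmulA. f_equal.
  rewrite (gmulA G m a), <- Ham, <- gmulA. f_equal.
  rewrite (gmulA G m b), <- Hbm, <- gmulA, Hm, gmul1r. reflexivity.
Qed.

Lemma comm_swap a b : a * a = e -> b * b = e -> comm G b a = inv (comm G a b).
Proof.
  intros Ha Hb. symmetry. apply inv_uniq. rewrite (comm_invol Ha Hb), (comm_invol Hb Ha).
  rewrite <- !gmulA. rewrite (gmulA G b b), Hb, gmul1l, (gmulA G a a), Ha, gmul1l,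
    (gmulA G b b), Hb, gmul1l. exact Ha.
Qed.

Lemma inv_inv a : inv (inv a) = a.
Proof. apply inv_uniq. apply gmulVl. Qed.

Lemma comm1 a b : comm G a b = e -> a * b = b * a.
Proof.
  unfold comm. intros H. rewrite <- gmulA in H. apply inv_uniq in H.
  rewrite inv_mul, !inv_inv in H. symmetry; exact H.
Qed.

Lemma comm_of a b : a * b = b * a -> comm G a b = e.
Proof.
  intros H. unfold comm. rewrite <- gmulA, H, <- inv_mul. apply gmulVl.
Qed.


Fixpoint pw (t : R) (n : nat) : R := match n with 0 => e | S n => pw t n * t end.

Lemma pw_even t : t * t = e -> t <> e -> forall n, pw t n = e <-> Nat.even n = true.
Proof.
  intros Ht Hne. fix IH 1. intros [|[|n]].
  - simpl. split; auto.
  - simpl. rewrite gmul1l. split; [intros H; contradiction| discriminate].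
  - simpl pw. rewrite <- gmulA, Ht, gmul1r. simpl Nat.even. apply IH.
Qed.

Lemma comm_prod a t (l : list R) : a * a = e -> t * t = e ->
  (forall b, In b l -> b * b = e /\ comm G a b = t) ->
  comm G a (gprod G l) = pw t (length l).
Proof.
  intros Ha Ht.
  assert (Hinvt : inv t = t) by (apply inv_invol; exact Ht).
  induction l as [|b l IH]; intros Hl.
  - simpl. apply comm_of. rewrite gmul1l, gmul1r. reflexivity.
  - simpl.
    destruct (Hl b (or_introl eq_refl)) as [Hb Hab].
    assert (Hlt : forall g, In g l -> g * t = t * g).
    { intros g Hg. destruct (Hl g (or_intror Hg)) as [Hg2 Hag].
      pose proof (comm_swap Ha Hg2) as Sw. rewrite Hag, Hinvt in Sw.
      rewrite (comm_invol Hg2 Ha) in Sw. rewrite (comm_invol Ha Hg2) in Hag.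
      rewrite <- Sw at 2. rewrite <- Hag.
      rewrite !gmulA. reflexivity. }
    assert (Hgt : gprod G l * t = t * gprod G l).
    { clear IH Hl. induction l as [|g l IHl]; simpl.
      - rewrite gmul1l, gmul1r. reflexivity.
      - rewrite <- gmulA, IHl, gmulA, (Hlt g (or_introl eq_refl)), <- gmulA. reflexivity.
        intros h Hh. apply Hlt. right; exact Hh. }
    rewrite <- (IH (fun c Hc => Hl c (or_intror Hc))).
    assert (Kat : a * t = b * (a * b)).
    { rewrite (comm_invol Ha Hb) in Hab. rewrite <- Hab, gmulA, Ha, gmul1l. reflexivity. }
    unfold comm. rewrite inv_mul, (inv_invol Hb), (inv_invol Ha).
    assert (K : b * (a * (b * gprod G l)) = a * (gprod G l * t)).
    { rewrite (gmulA G a b), (gmulA G b (a * b)), <- Kat, <- gmulA, <- Hgt. reflexivity. }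
    rewrite <- !gmulA, K. reflexivity.
Qed.

End Grp.

Section Geo.
Variables (P L : Type) (I : P -> L -> Prop).
Hypothesis HS : slim_dense_near_hexagon I.

Lemma col_sym x y : collinear I x y -> collinear I y x.
Proof. intros [H [l [H1 H2]]]. split; [congruence| exists l; tauto]. Qed.

Lemma walk_snoc x p y z : walk I x p y -> collinear I y z -> walk I x (p ++ [z]) z.
Proof.
  revert x. induction p as [|a p IH]; simpl; intros x Hw Hc.
  - subst. tauto.
  - destruct Hw as [H1 H2]. split; [exact H1| apply IH; assumption].
Qed.

Lemma within_snoc n x y z : within I n x y -> collinear I y z -> within I (S n) x z.
Proof.
  intros [p [Hl Hw]] Hc. exists (p ++ [z]). split.
  - rewrite length_app. simpl. lia.
  - apply walk_snoc with y; assumption.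
Qed.

Lemma within_cons n x m y : collinear I x m -> within I n m y -> within I (S n) x y.
Proof.
  intros Hc [p [Hl Hw]]. exists (m :: p). simpl. split; [lia| tauto].
Qed.

Lemma within_mono n m x y : n <= m -> within I n x y -> within I m x y.
Proof. intros H [p [Hl Hw]]. exists p. split; [lia|assumption]. Qed.

Lemma within0 x y : within I 0 x y <-> x = y.
Proof.
  split.
  - intros [p [Hl Hw]]. destruct p; simpl in *; [assumption| lia].
  - intros ->. exists []. simpl. split; auto.
Qed.

Lemma within_step n x y : within I (S n) x y -> x = y \/ exists m, collinear I x m /\ within I n m y.
Proof.
  intros [p [Hl Hw]]. destruct p as [|z p]; simpl in *.
  - left; assumption.
  - right. exists z. destruct Hw. split; [assumption|]. exists p. split; [lia|assumption].
Qed.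

Lemma within_sym n x y : within I n x y -> within I n y x.
Proof.
  revert x. induction n as [|n IH]; intros x H.
  - apply within0 in H. subst. apply within0. reflexivity.
  - apply within_step in H. destruct H as [->|[m [Hc Hw]]].
    + apply within_mono with 0; [lia| apply within0; reflexivity].
    + apply IH in Hw. apply within_snoc with m; [assumption| apply col_sym; assumption].
Qed.

Lemma diam3 x y : within I 3 x y.
Proof.
  destruct HS as [_ [[_ [[Hd _] _]] _]]. apply Hd; trivial.
Qed.

Definition dist (x y : P) : nat :=
  if excluded_middle_informative (within I 0 x y) then 0 else
  if excluded_middle_informative (within I 1 x y) then 1 else
  if excluded_middle_informative (within I 2 x y) then 2 else 3.

Lemma dist_spec x y n : within I n x y <-> dist x y <= n.
Proof.
  unfold dist.
  destruct (excluded_middle_informative (within I 0 x y)) as [H0|H0];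
  [| destruct (excluded_middle_informative (within I 1 x y)) as [H1|H1];
  [| destruct (excluded_middle_informative (within I 2 x y)) as [H2|H2]]].
  - split; [lia| intros; apply within_mono with 0; [lia|assumption]].
  - split.
    + intros H. destruct n; [contradiction| lia].
    + intros; apply within_mono with 1; [lia|assumption].
  - split.
    + intros H. destruct n as [|[|n]]; [contradiction|contradiction| lia].
    + intros; apply within_mono with 2; [lia|assumption].
  - split.
    + intros H. destruct n as [|[|[|n]]]; [contradiction|contradiction|contradiction| lia].
    + intros; apply within_mono with 3; [lia| apply diam3].
Qed.

Lemma dist_le3 x y : dist x y <= 3.
Proof. apply dist_spec, diam3. Qed.

Lemma dist_sym x y : dist x y = dist y x.
Proof.
  apply Nat.le_antisymm; apply dist_spec, within_sym, dist_spec; lia.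
Qed.

Lemma dist_0 x y : dist x y = 0 <-> x = y.
Proof.
  split.
  - intros H. apply within0, dist_spec. lia.
  - intros ->. assert (dist y y <= 0) by (apply dist_spec, within0; reflexivity). lia.
Qed.

Lemma dist_refl x : dist x x = 0.
Proof. apply dist_0; reflexivity. Qed.

Lemma dist_1 x y : dist x y = 1 <-> collinear I x y.
Proof.
  split.
  - intros H. assert (W : within I 1 x y) by (apply dist_spec; lia).
    apply within_step in W. destruct W as [->|[m [Hc Hw]]].
    + rewrite dist_refl in H. discriminate.
    + apply within0 in Hw. subst. assumption.
  - intros Hc. assert (dist x y <= 1).
    { apply dist_spec. apply within_cons with y; [assumption| apply within0; reflexivity]. }
    assert (dist x y <> 0). { intros H0. apply dist_0 in H0. destruct Hc. contradiction. }
    lia.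
Qed.

Lemma dist_tri x a b : dist a b = 1 -> dist x b <= dist x a + 1.
Proof.
  intros H. apply dist_1 in H. apply dist_spec.
  rewrite Nat.add_comm. simpl. apply within_snoc with a; [apply dist_spec; lia| assumption].
Qed.

Lemma dist_step x y k : dist x y = S k -> exists m, dist x m = 1 /\ dist m y = k.
Proof.
  intros H. assert (W : within I (S k) x y) by (apply dist_spec; lia).
  apply within_step in W. destruct W as [->|[m [Hc Hw]]].
  - rewrite dist_refl in H. discriminate.
  - exists m. apply dist_1 in Hc. split; [assumption|].
    apply dist_spec in Hw.
    assert (Hmx : dist m x = 1) by (rewrite dist_sym; assumption).
    pose proof (dist_tri y Hmx) as T.
    rewrite (dist_sym y x), (dist_sym y m) in T. lia.
Qed.

Definition line3 a b c := a <> b /\ a <> c /\ b <> c /\ exists l, I a l /\ I b l /\ I c l.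

Lemma line3_perm a b c : line3 a b c -> line3 b a c /\ line3 a c b.
Proof.
  intros [H1 [H2 [H3 [l [Ha [Hb Hc]]]]]].
  split; repeat split; try congruence; exists l; tauto.
Qed.

Lemma line3_132 a b c : line3 a b c -> line3 a c b. Proof. apply line3_perm. Qed.
Lemma line3_213 a b c : line3 a b c -> line3 b a c. Proof. apply line3_perm. Qed.
Lemma line3_231 a b c : line3 a b c -> line3 b c a.
Proof. intros H. apply line3_213, line3_132 in H. exact H. Qed.
Lemma line3_312 a b c : line3 a b c -> line3 c a b.
Proof. intros H. apply line3_231, line3_231 in H. exact H. Qed.
Lemma line3_321 a b c : line3 a b c -> line3 c b a.
Proof. intros H. apply line3_213, line3_312 in H. exact H. Qed.

Lemma on_line a b c l z : a <> b -> a <> c -> b <> c -> I a l -> I b l -> I c l -> I z l ->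
  z = a \/ z = b \/ z = c.
Proof.
  intros H1 H2 H3 Ha Hb Hc Hz.
  destruct HS as [[Hsl _] _].
  destruct (Hsl l) as [a' [b' [c' [D1 [D2 [D3 [_ [_ [_ Hall]]]]]]]]].
  destruct (Hall a Ha) as [ -> | [ -> | -> ]];
  destruct (Hall b Hb) as [ -> | [ -> | -> ]]; try congruence;
  destruct (Hall c Hc) as [ -> | [ -> | -> ]]; try congruence;
  destruct (Hall z Hz) as [ -> | [ -> | -> ]]; tauto.
Qed.

Lemma line3_ex a b : dist a b = 1 -> exists c, line3 a b c.
Proof.
  intros H. apply dist_1 in H. destruct H as [Hab [l [Ha Hb]]].
  destruct HS as [[Hsl _] _].
  destruct (Hsl l) as [a' [b' [c' [D1 [D2 [D3 [Ia [Ib [Ic Hall]]]]]]]]].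
  destruct (Hall a Ha) as [ -> | [ -> | -> ]];
  destruct (Hall b Hb) as [ -> | [ -> | -> ]]; try congruence;
  [exists c' | exists b' | exists c' | exists a' | exists b' | exists a'];
  repeat split; try congruence; exists l; tauto.
Qed.

Lemma line3_col a b c : line3 a b c -> collinear I a b.
Proof. intros [H1 [H2 [H3 [l [Ha [Hb Hc]]]]]]. split; [assumption| exists l; tauto]. Qed.

Lemma line3_d a b c : line3 a b c ->
  dist a b = 1 /\ dist b a = 1 /\ dist a c = 1 /\ dist c a = 1 /\ dist b c = 1 /\ dist c b = 1.
Proof.
  intros H.
  pose proof (line3_col H). pose proof (line3_col (line3_213 H)).
  pose proof (line3_col (line3_132 H)). pose proof (line3_col (line3_312 H)).
  pose proof (line3_col (line3_231 H)). pose proof (line3_col (line3_321 H)).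
  repeat split; apply dist_1; assumption.
Qed.

Lemma NP a b c w : line3 a b c ->
  (dist w b = dist w a + 1 /\ dist w c = dist w a + 1) \/
  (dist w a = dist w b + 1 /\ dist w c = dist w b + 1) \/
  (dist w a = dist w c + 1 /\ dist w b = dist w c + 1).
Proof.
  intros Hl. pose proof (line3_d Hl) as [d1 [d2 [d3 [d4 [d5 d6]]]]].
  destruct Hl as [H1 [H2 [H3 [l [Ha [Hb Hc]]]]]].
  destruct HS as [_ [[_ [_ [_ Hnp]]] _]].
  destruct (Hnp w l) as [y [Hy Hnear]].
  assert (K : forall z, I z l -> z <> y -> dist w z = dist w y + 1).
  { intros z Hz Hzy.
    destruct (Hnear z Hz Hzy (dist w z)) as [m [Hm Hw]].
    - apply dist_spec. lia.
    - apply dist_spec in Hw.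
      assert (dist y z = 1).
      { apply dist_1. split; [congruence| exists l; tauto]. }
      pose proof (dist_tri w H). lia. }
  destruct (on_line H1 H2 H3 Ha Hb Hc Hy) as [ -> | [ -> | -> ]].
  - left. split; apply K; auto.
  - right; left. split; apply K; auto.
  - right; right. split; apply K; auto.
Qed.

Lemma tri a b d c : line3 a b d -> dist c a = 1 -> dist c b = 1 -> c = d.
Proof.
  intros Hl H1 H2. pose proof (NP c Hl). apply dist_0. lia.
Qed.


Ltac dsym := repeat match goal with
 | H : dist ?a ?b = ?n |- _ => lazymatch goal with
     | _ : dist b a = n |- _ => fail
     | _ => pose proof (eq_trans (dist_sym b a) H)
   end
 end.

Ltac addsym := repeat match goal with
 | H : context [dist ?a ?b] |- _ => lazymatch goal with
     | _ : dist a b = dist b a |- _ => fail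
     | _ : dist b a = dist a b |- _ => fail
     | _ => pose proof (dist_sym a b) end
 | |- context [dist ?a ?b] => lazymatch goal with
     | _ : dist a b = dist b a |- _ => fail
     | _ : dist b a = dist a b |- _ => fail
     | _ => pose proof (dist_sym a b) end
 end.
Ltac dl := addsym; lia.

Ltac np w H := let X := fresh "X" in pose proof (NP w H) as X; addsym;
  destruct X as [[? ?]|[[? ?]|[? ?]]]; try (exfalso; dl).

Ltac ld H := pose proof (line3_d H) as (?&?&?&?&?&?).

Lemma QL a b c d e f : dist a b = 1 -> dist b c = 1 -> dist c d = 1 -> dist d a = 1 ->
  dist a c = 2 -> dist b d = 2 -> line3 a b e -> line3 c d f -> dist e f = 1.
Proof.
  intros H1 H2 H3 H4 H5 H6 L1 L2.
  np d L1. np c L1. np e L2. lia.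
Qed.

Lemma dist_eq_of x y n : dist x y = n -> dist_eq I x y n.
Proof.
  intros H. split.
  - apply dist_spec. lia.
  - intros m Hm W. apply dist_spec in W. lia.
Qed.

Lemma dist_of_eq x y n : dist_eq I x y n -> dist x y = n.
Proof.
  intros [W H]. apply dist_spec in W.
  destruct (Nat.lt_ge_cases (dist x y) n) as [Hl|Hl]; [|lia].
  exfalso. apply (H _ Hl). apply dist_spec. lia.
Qed.

Lemma DL x z : dist x z = 2 -> exists u1 u2, u1 <> u2 /\ dist x u1 = 1 /\ dist u1 z = 1 /\
  dist x u2 = 1 /\ dist u2 z = 1.
Proof.
  intros Hxz. destruct (dist_step Hxz) as [u [Hxu Huz]].
  destruct (classic (exists u2, u2 <> u /\ dist x u2 = 1 /\ dist u2 z = 1)) as [[u2 Hu2]|Hno].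
  { exists u, u2. intuition congruence. }
  exfalso.
  assert (Hno' : forall w, dist x w = 1 -> dist w z = 1 -> w = u).
  { intros w H1 H2. apply NNPP. intros Hw. apply Hno. exists w. auto. }
  clear Hno.
  pose proof HS as [_ [_ Hden]].
  destruct (Hden x z (dist_eq_of Hxz)) as [Q [[Hconv [[Hdiam _] Hnd]] [Qx Qz]]].
  assert (Qu : Q u).
  { apply (Hconv x z 2 [u; z] Qx Qz (dist_eq_of Hxz) eq_refl).
    - simpl. split; [apply dist_1; assumption|]. split; [apply dist_1; assumption| reflexivity].
    - simpl; auto. }
  destruct (classic (exists y, Q y /\ y <> u /\ ~ collinear I u y)) as [[y [Qy [Hyu Hcol]]]|Hall].
  2:{ apply Hnd. exists u. split; [assumption|]. intros y Qy Hyu.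
      apply NNPP. intros Hc. apply Hall. exists y. auto. }
  assert (Dux : dist u y <> 1) by (intros H; apply Hcol, dist_1; assumption).
  assert (Duy0 : dist u y <> 0) by (intros H; apply dist_0 in H; congruence).
  assert (Dxy : dist x y <= 2) by (apply dist_spec, Hdiam; assumption).
  assert (Dzy : dist z y <= 2) by (apply dist_spec, Hdiam; assumption).
  assert (Duy : dist u y <= 2) by (apply dist_spec, Hdiam; assumption).
  assert (Dxy0 : dist x y <> 0).
  { intros H. apply dist_0 in H. subst. dsym. lia. }
  assert (Dzy0 : dist z y <> 0).
  { intros H. apply dist_0 in H. subst. dsym. lia. }
  assert (Duy2 : dist u y = 2) by lia.
  clear Dux Duy0 Duy Hcol Hdiam Hconv Hnd Qx Qz Qu Qy Q Hden.
  destruct (line3_ex Hxu) as [x1 Lx]. destruct (line3_ex Huz) as [z1 Lz].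
  ld Lx. ld Lz.
  assert (dist x y = 1 \/ dist x y = 2) as [Ex|Ex] by lia;
  (assert (dist z y = 1 \/ dist z y = 2) as [Ez|Ez] by lia); clear Dxy Dzy Dxy0 Dzy0.
  - apply Hyu, Hno'; dl.
  -
    np y Lz. np x Lz.
    destruct (line3_ex Ex) as [t Lt]. ld Lt.
    pose proof (line3_312 Lz) as Ltz.
    assert (dist t z = 1).
    { apply (QL (a:=x) (b:=y) (c:=z1) (d:=u)); try dl; assumption. }
    assert (t = u) by (apply Hno'; dl). subst t. dl.
  -
    np y Lx. np z Lx.
    destruct (line3_ex Ez) as [t Lt]. ld Lt.
    pose proof (line3_321 Lx) as Ltz.
    assert (dist t x = 1).
    { apply (QL (a:=z) (b:=y) (c:=x1) (d:=u)); try dl; assumption. }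
    assert (t = u) by (apply Hno'; dl). subst t. dl.
  -
    np y Lx. np y Lz. np x Lz.
    assert (dist x1 z <> 0).
    { intros HH. apply dist_0 in HH. subst. dl. }
    assert (dist x1 z1 <> 0).
    { intros HH. apply dist_0 in HH. subst. assert (z1 = u) by (apply Hno'; dl). subst. dl. }
    np x1 Lz.
    assert (Hz1y : dist z1 y = 1) by dl.
    destruct (line3_ex Hz1y) as [s Ls]. ld Ls.
    pose proof (line3_321 Lx) as Lx'.
    assert (Hxs : dist x s = 1).
    { apply (QL (a:=x1) (b:=u) (c:=z1) (d:=y)); try dl; assumption. }
    destruct (line3_ex Hxs) as [c Lc]. ld Lc.
    np u Ls. np u Lc. np z1 Lc. np c Lz.
    assert (c = u) by (apply Hno'; dl). subst c. dl.
Qed.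


Variables (R : Type) (G : group R) (r : P -> R).
Hypothesis Hrep : representation I G r.
Local Notation "a * b" := (gmul G a b).
Local Notation e := (gone G).

Lemma r2 x : r x * r x = e.
Proof. destruct Hrep as [H _]. apply H. Qed.

Lemma r_ne x : r x <> e.
Proof. destruct Hrep as [H _]. apply H. Qed.

Lemma rline a b c : line3 a b c -> r a * r b = r c.
Proof.
  intros Hl. destruct Hrep as [_ [_ Hk]].
  destruct Hl as [H1 [H2 [H3 [l [Ha [Hb Hc]]]]]].
  destruct (Hk l a b c Ha Hb Hc H1 H2 H3) as [N1 [N2 [N3 [N4 [N5 [N6 [[_ [Hcl _]] _]]]]]]].
  destruct (Hcl (r a) (r b)) as [E|[E|[E|E]]]; try tauto.
  - exfalso. apply N4. rewrite <- (inv_invol (r2 a)). apply inv_uniq. exact E.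
  - exfalso. apply N2. apply (cancel_l (G:=G) (a := r a)). rewrite gmul1r. symmetry; exact E.
  - exfalso. apply N1. apply (cancel_r (G:=G) (a := r b)). rewrite gmul1l. symmetry; exact E.
Qed.

Lemma rline_comm a b c : line3 a b c -> r a * r b = r b * r a.
Proof. intros H. rewrite (rline H), (rline (line3_213 H)). reflexivity. Qed.

Lemma rcol a b : dist a b = 1 -> r a * r b = r b * r a.
Proof. intros H. destruct (line3_ex H) as [c Hc]. exact (rline_comm Hc). Qed.

Lemma comm2 x z : dist x z = 2 -> r x * r z = r z * r x.
Proof.
  intros Hxz. destruct (DL Hxz) as [u1 [u2 [Hne [H1 [H2 [H3 H4]]]]]].
  assert (Hu : dist u1 u2 = 2).
  { assert (dist u1 u2 <> 0) by (intros HH; apply dist_0 in HH; contradiction).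
    assert (dist u1 u2 <> 1).
    { intros HH. destruct (line3_ex HH) as [w Hw].
      assert (x = w) by (apply (tri Hw); dl). assert (z = w) by (apply (tri Hw); dl).
      subst. rewrite dist_refl in Hxz. discriminate. }
    assert (Hx1 : dist u1 x = 1) by dl.
    pose proof (dist_tri u2 H1). dl. }
  destruct (line3_ex H1) as [p Lp]. destruct (line3_ex (eq_trans (dist_sym z u2) H4)) as [s Ls].
  destruct (line3_ex H3) as [t Lt]. destruct (line3_ex (eq_trans (dist_sym z u1) H2)) as [q Lq].
  ld Lp. ld Ls. ld Lt. ld Lq.
  assert (Hps : dist p s = 1) by (apply (QL (a:=x) (b:=u1) (c:=z) (d:=u2)); dl || assumption).
  assert (Hqt : dist q t = 1) by (apply (QL (a:=z) (b:=u1) (c:=x) (d:=u2)); dl || assumption).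
  destruct (line3_ex Hps) as [c Lc]. ld Lc.
  np x Ls. np x Lc. np u2 Lp. np u2 Lc. np c Lt.
  np z Lp. np z Lc. np u1 Ls. np u1 Lc. np c Lq.
  assert (Htq : dist t q = 1) by dl.
  destruct (line3_ex Htq) as [c' Lc'].
  assert (c = c') by (apply (tri Lc'); dl). subst c'.
  pose proof (rline Lp) as Rp. pose proof (rline Ls) as Rs. pose proof (rline Lt) as Rt.
  pose proof (rline Lq) as Rq. pose proof (rline Lc) as Rc. pose proof (rline Lc') as Rc'.
  pose proof (rline_comm Lc) as Cps.
  apply (grid_alg (U := r u1) (V := r u2)).
  - apply rcol; assumption.
  - apply rcol; assumption.
  - apply rcol; dl.
  - apply rcol; dl.
  - rewrite Rp, Rt, Rq, Rs, Rc, Rc'. reflexivity.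
  - rewrite Rp, Rs. exact Cps.
Qed.

Lemma comm_le2 x z : dist x z <= 2 -> r x * r z = r z * r x.
Proof.
  intros H. assert (dist x z = 0 \/ dist x z = 1 \/ dist x z = 2) as [E|[E|E]] by lia.
  - apply dist_0 in E. subst. reflexivity.
  - apply rcol; assumption.
  - apply comm2; assumption.
Qed.


Lemma cn2 x z u1 u2 : dist x z = 2 -> u1 <> u2 -> dist x u1 = 1 -> dist u1 z = 1 ->
  dist x u2 = 1 -> dist u2 z = 1 -> dist u1 u2 = 2.
Proof.
  intros Hxz Hne H1 H2 H3 H4.
  assert (dist u1 u2 <> 0) by (intros HH; apply dist_0 in HH; contradiction).
  assert (dist u1 u2 <> 1).
  { intros HH. destruct (line3_ex HH) as [w Hw].
    assert (x = w) by (apply (tri Hw); dl). assert (z = w) by (apply (tri Hw); dl).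
    subst. rewrite dist_refl in Hxz. discriminate. }
  pose proof (dist_tri u2 H1). dl.
Qed.

Lemma Eline x y y' : dist x y = 3 -> dist x y' = 3 -> dist y y' = 1 ->
  comm G (r x) (r y) = comm G (r x) (r y').
Proof.
  intros H1 H2 H3. destruct (line3_ex H3) as [m Lm]. ld Lm. np x Lm.
  pose proof (line3_132 Lm) as Lm'.
  rewrite <- (rline Lm'). symmetry. apply comm_mulr; try apply r2.
  - apply comm_le2. lia.
  - apply rcol. assumption.
Qed.

Lemma P2 x y y' : dist x y = 3 -> dist x y' = 3 -> dist y y' = 2 ->
  comm G (r x) (r y) = comm G (r x) (r y').
Proof.
  intros H1 H2 H3. destruct (DL H3) as [v1 [v2 [Hne [A1 [A2 [A3 A4]]]]]].
  assert (B1 : dist v1 y = 1) by dl. assert (B3 : dist v2 y = 1) by dl.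
  pose proof (dist_tri x B1). pose proof (dist_tri x B3).
  pose proof (dist_le3 x v1). pose proof (dist_le3 x v2).
  destruct (Nat.eq_dec (dist x v1) 3) as [E1|E1].
  { rewrite (Eline H1 E1 A1). apply Eline; assumption. }
  destruct (Nat.eq_dec (dist x v2) 3) as [E2|E2].
  { rewrite (Eline H1 E2 A3). apply Eline; assumption. }
  pose proof (cn2 H3 Hne A1 A2 A3 A4).
  destruct (line3_ex A1) as [y1 L1]. assert (C4 : dist y' v2 = 1) by dl.
  destruct (line3_ex C4) as [s Ls]. ld L1. ld Ls.
  assert (dist y1 s = 1) by (apply (QL (a:=y) (b:=v1) (c:=y') (d:=v2)); dl || assumption).
  np x L1. np x Ls.
  rewrite (Eline (y':=y1)) by dl. rewrite (Eline (y:=y1) (y':=s)) by dl.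
  apply Eline; dl.
Qed.

Lemma W x y v : dist x y = 3 -> dist x v = 2 -> dist y v = 2 ->
  exists w, dist y w = 1 /\ dist w v = 1 /\ dist x w = 3.
Proof.
  intros H1 H2 H3. destruct (DL H3) as [m1 [m2 [Hne [A1 [A2 [A3 A4]]]]]].
  destruct (Nat.eq_dec (dist x m1) 3) as [E1|E1]; [exists m1; auto|].
  destruct (Nat.eq_dec (dist x m2) 3) as [E2|E2]; [exists m2; auto|].
  exfalso.
  assert (B1 : dist m1 y = 1) by dl. assert (B3 : dist m2 y = 1) by dl.
  pose proof (dist_tri x B1). pose proof (dist_tri x B3).
  pose proof (dist_le3 x m1). pose proof (dist_le3 x m2).
  pose proof (cn2 H3 Hne A1 A2 A3 A4).
  destruct (line3_ex A1) as [a La]. assert (C4 : dist v m2 = 1) by dl.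
  destruct (line3_ex C4) as [b Lb]. ld La. ld Lb.
  assert (Hab : dist a b = 1) by (apply (QL (a:=y) (b:=m1) (c:=v) (d:=m2)); dl || assumption).
  np x La. np x Lb. pose proof (dist_tri x (eq_trans (dist_sym b a) Hab)). lia.
Qed.

Lemma phi_const x y y' : dist x y = 3 -> dist x y' = 3 ->
  comm G (r x) (r y) = comm G (r x) (r y').
Proof.
  intros H1 H2. pose proof (dist_le3 y y') as Hle.
  assert (dist y y' = 0 \/ dist y y' = 1 \/ dist y y' = 2 \/ dist y y' = 3) as [E|[E|[E|E]]] by lia.
  - apply dist_0 in E. subst. reflexivity.
  - apply Eline; assumption.
  - apply P2; assumption.
  - assert (E' : dist y' y = 3) by dl. destruct (dist_step E') as [v2 [B1 B2]].
    assert (B1' : dist v2 y' = 1) by dl.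
    pose proof (dist_tri x B1'). pose proof (dist_le3 x v2).
    destruct (Nat.eq_dec (dist x v2) 3) as [F|F].
    + rewrite (P2 (y':=v2)) by dl. apply Eline; dl.
    + destruct (W (x:=x) (y:=y) (v:=v2)) as [w [C1 [C2 C3]]]; try dl.
      assert (C2' : dist v2 y' = 1) by dl.
      pose proof (dist_tri w C2'). pose proof (dist_tri y' (eq_trans (dist_sym w y) C1)).
      rewrite (Eline (y':=w)) by dl. apply P2; dl.
Qed.

Lemma L3 x y v : dist x y = 3 -> dist x v = 2 -> exists w, dist v w = 1 /\ dist x w = 3.
Proof.
  intros Hy Hv.
  set (D := fun v => exists w, dist v w = 1 /\ dist x w = 3).
  assert (D1 : forall v y0, dist x v = 2 -> dist x y0 = 3 -> dist y0 v = 2 -> D v).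
  { intros v0 y0 H1 H2 H3. destruct (W H2 H1 H3) as [w [_ [C2 C3]]]. exists w. split; dl. }
  assert (D2 : forall v v', D v -> dist x v = 2 -> dist x v' = 2 -> dist v v' = 1 -> D v').
  { intros v0 v' [w0 [K1 K2]] H1 H2 H3. destruct (line3_ex H3) as [v'' Lq]. ld Lq. np x Lq.
    assert (dist w0 v' <> 0) by (intros HH; apply dist_0 in HH; subst; lia).
    assert (dist w0 v' <> 1).
    { intros HH. assert (w0 = v'') by (apply (tri Lq); dl). subst. lia. }
    pose proof (dist_tri w0 H3).
    apply (D1 v' w0); dl. }
  assert (D3 : forall v w, D w -> dist x v = 2 -> dist x w = 2 -> dist v w = 2 -> D v).
  { intros v0 w Dw H1 H2 H3. destruct (DL H3) as [m1 [m2 [Hne [A1 [A2 [A3 A4]]]]]].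
    pose proof (dist_tri x A1). pose proof (dist_tri x A3).
    assert (A1' : dist m1 v0 = 1) by dl. assert (A3' : dist m2 v0 = 1) by dl.
    pose proof (dist_tri x A1'). pose proof (dist_tri x A3').
    pose proof (dist_le3 x m1). pose proof (dist_le3 x m2).
    destruct (Nat.eq_dec (dist x m1) 3) as [E1|E1]; [exists m1; auto|].
    destruct (Nat.eq_dec (dist x m2) 3) as [E2|E2]; [exists m2; auto|].
    destruct (Nat.eq_dec (dist x m1) 2) as [F1|F1].
    { apply (D2 m1); [apply (D2 w); [exact Dw|dl|dl|dl]|dl|dl|dl]. }
    destruct (Nat.eq_dec (dist x m2) 2) as [F2|F2].
    { apply (D2 m2); [apply (D2 w); [exact Dw|dl|dl|dl]|dl|dl|dl]. }
    pose proof (cn2 H3 Hne A1 A2 A3 A4).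
    destruct (line3_ex A1) as [v1 Lv]. assert (C4 : dist w m2 = 1) by dl.
    destruct (line3_ex C4) as [w' Lw]. ld Lv. ld Lw.
    assert (dist v1 w' = 1) by (apply (QL (a:=v0) (b:=m1) (c:=w) (d:=m2)); dl || assumption).
    np x Lv. np x Lw.
    apply (D2 v1); [| dl | dl | dl].
    apply (D2 w'); [| dl | dl | dl].
    apply (D2 w); [assumption | dl | dl | dl]. }
  pose proof (dist_le3 y v).
  assert (dist y v <> 0) by (intros HH; apply dist_0 in HH; subst; lia).
  assert (dist y v = 1 \/ dist y v = 2 \/ dist y v = 3) as [E|[E|E]] by lia.
  - exists y. split; dl.
  - apply (D1 v y); assumption.
  - destruct (dist_step E) as [y1 [B1 B2]].
    pose proof (dist_tri x B1). pose proof (dist_le3 x y1).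
    assert (B1' : dist y1 y = 1) by dl. pose proof (dist_tri x B1').
    destruct (Nat.eq_dec (dist x y1) 3) as [F|F].
    + apply (D1 v y1); dl.
    + apply (D3 v y1); [exists y; split; dl | dl | dl | dl].
Qed.


Lemma T x y : dist x y = 3 -> exists z, dist x z = 3 /\ dist y z = 3.
Proof.
  intros Hxy. assert (Hyx : dist y x = 3) by dl.
  destruct (dist_step Hyx) as [m [M1 M2]].
  destruct (line3_ex M1) as [y2 Ly]. ld Ly.
  pose proof (dist_le3 x y2). pose proof (dist_le3 x m). np x Ly.
  assert (Hy2x : dist y2 x = 3) by dl.
  destruct (dist_step Hy2x) as [a [A1 A2]].
  destruct (dist_step A2) as [b [B1 B2]].
  assert (Hy2b : dist y2 b = 2).
  { pose proof (dist_tri y2 B1). pose proof (dist_tri y2 B2).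
    assert (dist y2 b <> 0) by (intros HH; apply dist_0 in HH; subst; dl). dl. }
  assert (Hby : dist b y <> 1).
  { intros HH. pose proof (dist_tri x HH). dl. }
  destruct (DL Hy2b) as [a1 [a2 [Hne [C1 [C2 [C3 C4]]]]]].
  assert (exists n, dist y2 n = 1 /\ n <> y /\ n <> m) as [n [N1 [N2 N3]]].
  { destruct (classic (a1 = m)) as [->|Ha1].
    - exists a2. split; [assumption|]. split; [|congruence].
      intros ->. apply Hby. dl.
    - exists a1. split; [assumption|]. split; [|assumption].
      intros ->. apply Hby. dl. }
  destruct (line3_ex N1) as [n' Ln]. ld Ln.
  assert (Lyy2 : line3 y y2 m) by exact (line3_132 Ly).
  assert (Dyn : dist y n = 2 /\ dist y n' = 2).
  { pose proof (NP y Ln) as [[K1 K2]|[[K1 K2]|[K1 K2]]].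
    - split; dl.
    - exfalso. assert (HH : dist y n = 0) by dl. apply dist_0 in HH. congruence.
    - exfalso. assert (HH : dist y n' = 0) by dl. apply dist_0 in HH. subst n'.
      apply N3. apply (tri Lyy2); dl. }
  destruct Dyn as [Dyn Dyn'].
  pose proof (dist_le3 x n). pose proof (dist_le3 x n').
  assert (exists v, dist x v = 3 /\ dist y v = 2) as [v [V1 V2]].
  { pose proof (NP x Ln) as [[K1 K2]|[[K1 K2]|[K1 K2]]].
    - exfalso. dl.
    - exists n'. split; dl.
    - exists n. split; dl. }
  destruct (L3 Hyx V2) as [z1 [Z1 Z2]].
  destruct (line3_ex Z1) as [z2 Lz]. ld Lz.
  pose proof (dist_le3 y z2). pose proof (dist_le3 x z1). pose proof (dist_le3 x z2).
  np y Lz.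
  pose proof (NP x Lz) as [[K1 K2]|[[K1 K2]|[K1 K2]]].
  - exfalso. dl.
  - exists z2. split; dl.
  - exists z1. split; dl.
Qed.

Lemma cent_sub (X : R -> Prop) : subgroup G (fun h => forall c, X c -> c * h = h * c).
Proof.
  split; [|split].
  - intros c _. rewrite gmul1l, gmul1r. reflexivity.
  - intros a b Ha Hb c Hc. rewrite gmulA, (Ha c Hc), <- gmulA, (Hb c Hc), gmulA. reflexivity.
  - intros a Ha c Hc. pose proof (Ha c Hc) as E.
    apply (cancel_l (G:=G) (a := a)). rewrite (gmulA G a c), <- E, <- !gmulA, gmulVr, gmul1r.
    rewrite (gmulA G a (ginv G a)), gmulVr, gmul1l. reflexivity.
Qed.

Definition central z := forall w, r z * r w = r w * r z.

Lemma nontriv x y : ~ abelian G -> dist x y = 3 -> comm G (r x) (r y) <> e.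
Proof.
  intros Hna Hxy Hc. apply Hna.
  assert (Lcen : forall z w, dist z w = 3 -> comm G (r z) (r w) = e -> central z).
  { intros z w Hzw Hc0 u. pose proof (dist_le3 z u).
    destruct (Nat.eq_dec (dist z u) 3) as [E|E].
    - apply comm1. rewrite (phi_const E Hzw). exact Hc0.
    - apply comm_le2. lia. }
  assert (Zprop : forall z z', central z -> dist z' z = 3 -> central z').
  { intros z z' Cz H. apply (Lcen z' z H). apply comm_of. symmetry. apply Cz. }
  assert (Zline : forall a b c, central a -> central b -> line3 a b c -> central c).
  { intros a b c Ca Cb Hl w. rewrite <- (rline Hl).
    rewrite <- gmulA, (Cb w), gmulA, (Ca w), <- gmulA. reflexivity. }
  assert (Cx : central x) by exact (Lcen x y Hxy Hc).
  assert (Cy : central y) by (apply (Zprop x); [assumption|dl]).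
  assert (Call : forall w, central w).
  { intros w. pose proof (dist_le3 x w).
    assert (dist x w = 0 \/ dist x w = 1 \/ dist x w = 2 \/ dist x w = 3) as [E|[E|[E|E]]] by lia.
    - apply dist_0 in E. subst. exact Cx.
    - destruct (line3_ex E) as [w' Lw]. ld Lw.
      pose proof (dist_le3 y w). pose proof (dist_le3 y w').
      pose proof (NP y Lw) as [[K1 K2]|[[K1 K2]|[K1 K2]]].
      + exfalso. dl.
      + apply (Zline x w'); [exact Cx| apply (Zprop y); [assumption|dl] | exact (line3_132 Lw)].
      + apply (Zprop y); [assumption|dl].
    - destruct (L3 Hxy E) as [y1 [Y1 Y2]].
      destruct (line3_ex Y1) as [y2 Ly]. ld Ly. pose proof (dist_le3 x y2). np x Ly.
      apply (Zline y1 y2); [apply (Zprop x); [assumption|dl] | apply (Zprop x); [assumption|dl] | exact (line3_231 Ly)].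
    - apply (Zprop x); [assumption|dl]. }
  destruct Hrep as [_ [Hgen _]].
  assert (S1 : forall g, forall c, (exists w, c = r w) -> c * g = g * c).
  { apply (Hgen _ (cent_sub _)). intros a c [w ->]. apply Call. }
  intros g h.
  apply (Hgen _ (cent_sub (fun c => c = g))).
  - intros a c ->. symmetry. apply S1. exists a. reflexivity.
  - reflexivity.
Qed.

Lemma theta2 x y : dist x y = 3 -> comm G (r x) (r y) * comm G (r x) (r y) = e.
Proof.
  intros Hxy. destruct (T Hxy) as [z [Z1 Z2]].
  assert (Hyx : dist y x = 3) by dl. assert (Hzx : dist z x = 3) by dl. assert (Hzy : dist z y = 3) by dl.
  pose proof (comm_swap (r2 x) (r2 y)) as S1.
  pose proof (comm_swap (r2 y) (r2 z)) as S2.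
  pose proof (comm_swap (r2 z) (r2 x)) as S3.
  rewrite (phi_const Hyx Z2) in S1. rewrite (phi_const Hzy Hzx) in S2.
  rewrite (phi_const Z1 Hxy) in S3.
  rewrite S2, S1, inv_inv in S3.
  rewrite S3 at 2. apply gmulVr.
Qed.

End Geo.

Unset Implicit Arguments.
Set Strict Implicit.

Theorem lemma4p5 (P L : Type) (I : P -> L -> Prop)
  (HS : slim_dense_near_hexagon I)
  (R : Type) (G : group R) (r : P -> R)
  (Hrep : representation I G r) (Hna : ~ abelian G)
  (x : P) (Y : list P) (HY : NoDup Y) (HY3 : forall y, In y Y -> Gamma3 I x y) :
  comm G (r x) (gprod G (map r Y)) = gone G <-> Nat.even (length Y) = true.
Proof.
  destruct Y as [|y0 Y0].
  - simpl. split; [reflexivity|]. intros _. apply comm_of. rewrite gmul1l, gmul1r. reflexivity.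
  - assert (H0 : dist I x y0 = 3) by (apply (dist_of_eq HS), HY3; left; reflexivity).
    rewrite (comm_prod (t := comm G (r x) (r y0))).
    + rewrite length_map. apply pw_even.
      * exact (theta2 HS Hrep H0).
      * exact (nontriv HS Hrep Hna H0).
    + apply (r2 Hrep).
    + exact (theta2 HS Hrep H0).
    + intros b Hb. apply in_map_iff in Hb. destruct Hb as [y [<- Hy]].
      split; [apply (r2 Hrep)|].
      apply (phi_const HS Hrep); [| exact H0].
      apply (dist_of_eq HS), HY3; exact Hy.
Qed.
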